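(* Fix the finite sets $S,B$ and the transition function $p$, and identify a game with its payoff function $u\in\mathbb{R}^{2\times S\times B}$. Let a game $G$ be given. (i) If condition B holds for $G$, then every neighborhood of $G$ contains a game $G'$ with $\widehat{E}_{G'}(\mathcal{M})\neq\emptyset$. (ii) If condition B does not hold for $G$, then there is a neighborhood $\mathcal{N}$ of $G$ such that condition B does not hold for any game in $\mathcal{N}$.
   Context: Setting: finite state set $S$, message set $A=S$, finite action set $B$ of the receiver, an irreducible aperiodic Markov chain on $S$ with transition function $p$ and invariant measure $m\in\Delta(S)$; a game is a payoff function $u=(u^1,u^2):S\times B\to\mathbb{R}^2$ (player 1 = sender, player 2 = receiver), extended linearly to mixed actions. $\mathcal{M}\subset\Delta(S\times A)$ is the set of distributions with both marginals equal to $m$; $\mu_0(s,s)=m(s)$, $\mu_0(s,a)=0$ for $s\ne a$. For $\mu\in\mathcal{M}$ and $y:A\to\Delta(B)$, $U(\mu,y)=\sum_{s,a}\mu(s,a)u(s,y(\cdot\mid a))$, and $v^2=\max_{b\in B}\sum_s m(s)u^2(s,b)$ (all computed with the payoff function of the game under consideration). Conditions on $y$: (C1) $U^1(\mu_0,y)\ge U^1(\mu,y)$ for all $\mu\in\mathcal{M}$; (C2) $U^2(\mu_0,y)\ge v^2$; (D1) $U^1(\mu_0,y)>U^1(\mu,y)$ for all $\mu\in\mathcal{M}$, $\mu\ne\mu_0$; (D2) $U^2(\mu_0,y)>v^2$. $\widehat{E}_{G}(\mathcal{M})$ is the set of vectors $U(\mu_0,y)$ with $y$ satisfying (D1),(D2)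 in game $G$. Condition B for a game: there is a non-constant map $y:S\to\Delta(B)$ satisfying (C1) and (C2) in that game. *)

(* Defs.v *)
From HB Require Import structures.
From mathcomp Require Import all_boot all_order all_algebra.
From mathcomp Require Import reals.
Set Implicit Arguments. Unset Strict Implicit. Unset Printing Implicit Defensive.
Import Order.TTheory GRing.Theory Num.Theory.
Local Open Scope ring_scope.

Section Defs.
Variables (R : realType) (S B : finType).

Definition mc_stochastic (p : S -> S -> R) : Prop :=
  (forall s t, 0 <= p s t) /\ (forall s, \sum_t p s t = 1).

Fixpoint nstep (p : S -> S -> R) (n : nat) (s t : S) : R :=
  match n with
  | 0 => (s == t)%:R
  | k.+1 => \sum_u nstep p k s u * p u t
  end.

Definition mc_irreducible (p : S -> S -> R) : Prop :=
  forall s t, exists n, 0 < nstep p n s t.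

(** Aperiodic: every state has period 1, i.e. the gcd of the return times
    {n >= 1 | p^(n)(s,s) > 0} equals 1. *)
Definition mc_aperiodic (p : S -> S -> R) : Prop :=
  forall s (d : nat), (forall n, (0 < n)%N -> 0 < nstep p n s s -> (d %| n)%N) -> d = 1%N.

Definition distrib (m : S -> R) : Prop := (forall s, 0 <= m s) /\ \sum_s m s = 1.
Definition mc_invariant (p : S -> S -> R) (m : S -> R) : Prop :=
  distrib m /\ forall t, \sum_s m s * p s t = m t.

Definition game := ((S -> B -> R) * (S -> B -> R))%type.

(** Receiver strategies y : A -> Delta(B), with A = S. *)
Definition strategy (y : S -> B -> R) : Prop :=
  forall a, (forall b, 0 <= y a b) /\ \sum_b y a b = 1.

Definition mixpay (v : S -> B -> R) (s : S) (x : B -> R) : R := \sum_b x b * v s b.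

Definition inM (m : S -> R) (mu : S -> S -> R) : Prop :=
  (forall s a, 0 <= mu s a) /\ \sum_s \sum_a mu s a = 1 /\
  (forall s, \sum_a mu s a = m s) /\ (forall a, \sum_s mu s a = m a).

Definition mu0 (m : S -> R) (s a : S) : R := if s == a then m s else 0.

Definition Upay (v : S -> B -> R) (mu : S -> S -> R) (y : S -> B -> R) : R :=
  \sum_s \sum_a mu s a * mixpay v s (y a).

(** v^2 = max_b sum_s m(s) u^2(s,b) (B nonempty; the seed is irrelevant then). *)
Definition v2 (m : S -> R) (G : game) : R :=
  let f b := \sum_s m s * G.2 s b in
  \big[Num.max/(match [pick b : B] with Some b0 => f b0 | None => 0 end)]_b f b.

Definition C1 (m : S -> R) (G : game) (y : S -> B -> R) : Prop :=
  forall mu, inM m mu -> Upay G.1 mu y <= Upay G.1 (mu0 m) y.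
Definition C2 (m : S -> R) (G : game) (y : S -> B -> R) : Prop :=
  v2 m G <= Upay G.2 (mu0 m) y.
Definition D1 (m : S -> R) (G : game) (y : S -> B -> R) : Prop :=
  forall mu, inM m mu -> mu <> mu0 m -> Upay G.1 mu y < Upay G.1 (mu0 m) y.
Definition D2 (m : S -> R) (G : game) (y : S -> B -> R) : Prop :=
  v2 m G < Upay G.2 (mu0 m) y.

Definition Ehat (m : S -> R) (G : game) : R * R -> Prop :=
  fun w => exists y, strategy y /\ D1 m G y /\ D2 m G y /\
                     w = (Upay G.1 (mu0 m) y, Upay G.2 (mu0 m) y).

Definition condB (m : S -> R) (G : game) : Prop :=
  exists y, strategy y /\ (exists a a', y a <> y a') /\ C1 m G y /\ C2 m G y.

Definition near_game (eps : R) (G G' : game) : Prop :=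
  forall s b, `|G'.1 s b - G.1 s b| < eps /\ `|G'.2 s b - G.2 s b| < eps.

End Defs.

(* Main.v *)
Require Import Defs.
From HB Require Import structures.
From mathcomp Require Import all_boot all_order all_algebra.
From mathcomp Require Import reals.
From mathcomp Require Import ring lra.
From Stdlib Require Import FunctionalExtensionality.
From mathcomp Require Import boolp classical_sets topology normedtype sequences.
From Stdlib Require Classical_Prop.
Import Order.TTheory GRing.Theory Num.Theory.
Import numFieldNormedType.Exports.
Set Implicit Arguments. Unset Strict Implicit. Unset Printing Implicit Defensive.
Local Open Scope ring_scope.

Section Basics.
Variables (R : realType) (S B : finType).
Implicit Types (m : S -> R) (mu : S -> S -> R) (y : S -> B -> R) (v : S -> B -> R).

Lemma mixpayE v s (x : B -> R) : mixpay v s x = \sum_b x b * v s b.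
Proof. by []. Qed.

Lemma mixpay_lin v s (c x : B -> R) (t : R) :
  mixpay v s (fun b => c b + t * x b) = mixpay v s c + t * mixpay v s x.
Proof.
rewrite /mixpay mulr_sumr -big_split /=; apply: eq_bigr => b _; ring.
Qed.

Lemma mixpay_sub v s (x z : B -> R) :
  mixpay v s x - mixpay v s z = \sum_b (x b - z b) * v s b.
Proof.
rewrite /mixpay -sumrB; apply: eq_bigr => b _; ring.
Qed.

Lemma Upay_mu0 m v y : Upay v (mu0 m) y = \sum_s m s * mixpay v s (y s).
Proof.
rewrite /Upay; apply: eq_bigr => s _.
rewrite (bigD1 s) //= /mu0 eqxx big1 ?addr0 // => a /negbTE.
by rewrite eq_sym => ->; rewrite mul0r.
Qed.

Lemma marg_col m mu (h : S -> R) : inM m mu ->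
  \sum_s \sum_a mu s a * h a = \sum_s \sum_a mu s a * h s.
Proof.
case=> _ [_ [Hr Hc]].
rewrite exchange_big /=.
transitivity (\sum_a m a * h a).
  by apply: eq_bigr => a _; rewrite -Hc mulr_suml.
by apply: eq_bigr => s _; rewrite -Hr mulr_suml.
Qed.

Lemma Upay_diff m mu v y : inM m mu ->
  Upay v (mu0 m) y - Upay v mu y =
  \sum_s \sum_a mu s a * (mixpay v s (y s) - mixpay v s (y a)).
Proof.
move=> HM; have [_ [_ [Hr _]]] := HM.
rewrite Upay_mu0 /Upay -sumrB; apply: eq_bigr => s _.
rewrite -Hr mulr_suml -sumrB; apply: eq_bigr => a _; ring.
Qed.

Lemma sq_ident m mu (x : S -> B -> R) : inM m mu ->
  \sum_s \sum_a mu s a * (\sum_b x s b * (x s b - x a b)) =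
  \sum_s \sum_a mu s a * ((\sum_b (x s b - x a b) ^+ 2) / 2).
Proof.
move=> HM.
have H := marg_col (fun s => \sum_b x s b ^+ 2) HM.
have E : forall s a, \sum_b x s b * (x s b - x a b) =
   (\sum_b (x s b - x a b) ^+ 2) / 2 + ((\sum_b x s b ^+ 2) - (\sum_b x a b ^+ 2)) / 2.
  move=> s a; rewrite -sumrB mulr_suml mulr_suml -big_split /=.
  by apply: eq_bigr => b _; field.
under eq_bigr do under eq_bigr do rewrite E mulrDr.
rewrite (eq_bigr (fun s => \sum_a mu s a * ((\sum_b (x s b - x a b) ^+ 2) / 2) +
    \sum_a mu s a * ((\sum_b x s b ^+ 2 - \sum_b x a b ^+ 2) / 2))); last first.
  by move=> s _; rewrite big_split.
rewrite big_split /= -[RHS]addr0; congr (_ + _).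
under eq_bigr do under eq_bigr do rewrite mulrA mulrBr.
under eq_bigr do rewrite -mulr_suml sumrB.
rewrite -mulr_suml sumrB H subrr mul0r //.
Qed.

End Basics.

Lemma exmax (R : realType) (I : finType) (i0 : I) (F : I -> R) :
  exists j, forall i, F i <= F j.
Proof.
exists [arg max_(i > i0) F i]%O.
by case: arg_maxP => // j _ H i; apply: H.
Qed.

Lemma exmin (R : realType) (I : finType) (i0 : I) (F : I -> R) :
  exists j, forall i, F j <= F i.
Proof.
exists [arg min_(i < i0) F i]%O.
by case: arg_minP => // j _ H i; apply: H.
Qed.

Section V2.
Variables (R : realType) (S B : finType).

Lemma v2_ge m (G : game R S B) b : \sum_s m s * G.2 s b <= v2 m G.
Proof. rewrite /v2 /=. exact: le_bigmax. Qed.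

Lemma v2_attain m (G : game R S B) (b0 : B) : exists b, v2 m G <= \sum_s m s * G.2 s b.
Proof.
pose f b := \sum_s m s * G.2 s b.
have [bm Hm] := exmax b0 f.
exists bm. rewrite /v2 /=.
apply: bigmax_le => //; last by move=> i _; apply: Hm.
by case: pickP => [b _|H]; [exact: Hm | have := H b0].
Qed.

Lemma v2_ext m (G G' : game R S B) :
  (forall b, \sum_s m s * G.2 s b = \sum_s m s * G'.2 s b) -> v2 m G = v2 m G'.
Proof.
move=> H; rewrite /v2 /=. case: pickP => [b _|_]; rewrite ?H;
by apply: eq_bigr => i _; rewrite H.
Qed.

Lemma A_le_v2 m (G : game R S B) (c : B -> R) :
  (forall b, 0 <= c b) -> \sum_b c b = 1 ->
  \sum_s m s * mixpay G.2 s c <= v2 m G.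
Proof.
move=> c0 c1.
have -> : \sum_s m s * mixpay G.2 s c = \sum_b c b * \sum_s m s * G.2 s b.
  rewrite /mixpay; under eq_bigr do rewrite mulr_sumr.
  rewrite exchange_big /=; apply: eq_bigr => b _; rewrite mulr_sumr.
  by apply: eq_bigr => s _; ring.
apply: le_trans (_ : \sum_b c b * v2 m G <= _).
  by apply: ler_sum => b _; apply: ler_wpM2l => //; apply: v2_ge.
by rewrite -mulr_suml c1 mul1r.
Qed.

End V2.

Section MC.
Variables (R : realType) (S : finType).

Lemma nstep_ge0 (p : S -> S -> R) n s t : mc_stochastic p -> 0 <= nstep p n s t.
Proof.
case=> p0 _; elim: n t => [|n IH] t /=; first by rewrite ler0n.
by apply: sumr_ge0 => u _; apply: mulr_ge0.
Qed.

Lemma nstep_inv (p : S -> S -> R) m n t : mc_invariant p m ->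
  \sum_s m s * nstep p n s t = m t.
Proof.
case=> _ Hi; elim: n t => [|n IH] t /=.
  rewrite (bigD1 t) //= eqxx mulr1 big1 ?addr0 // => s /negbTE ->.
  by rewrite mulr0.
under eq_bigr do rewrite mulr_sumr.
rewrite exchange_big /= -[RHS]Hi; apply: eq_bigr => u _.
by rewrite -IH mulr_suml; apply: eq_bigr => s _; rewrite mulrA.
Qed.

Lemma m_pos (p : S -> S -> R) m : mc_stochastic p -> mc_irreducible p ->
  mc_invariant p m -> forall t, 0 < m t.
Proof.
move=> Hs Hirr Hi t.
have [[m0 m1] _] := Hi.
have [s0 Hs0] : exists s, 0 < m s.
  case/boolP: [exists s, 0 < m s] => [/existsP //|/existsPn H].
  have : \sum_s m s <= 0 by apply: sumr_le0 => s _; rewrite leNgt H.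
  by rewrite m1 ler10.
have [n Hn] := Hirr s0 t.
rewrite -(nstep_inv n t Hi) (bigD1 s0) //=.
apply: (lt_le_trans (mulr_gt0 Hs0 Hn)); rewrite lerDl.
by apply: sumr_ge0 => s _; apply: mulr_ge0 => //; apply: nstep_ge0.
Qed.

Lemma m_le1 (m : S -> R) s : distrib m -> m s <= 1.
Proof.
case=> m0 m1; rewrite -m1 (bigD1 s) //= lerDl.
by apply: sumr_ge0.
Qed.

End MC.

Section Helpers.
Variable R : realType.

Lemma bigmin_pos (I : finType) (P : pred I) (F : I -> R) :
  (forall i, P i -> 0 < F i) -> 0 < \big[Num.min/1]_(i | P i) F i.
Proof.
move=> H; apply: (big_ind (fun v => 0 < v)) => //.
by move=> x z hx hz; rewrite lt_min hx hz.
Qed.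

Lemma bigmin_le1 (I : finType) (P : pred I) (F : I -> R) :
  \big[Num.min/1]_(i | P i) F i <= 1.
Proof. exact: bigmin_le_id. Qed.

Lemma bigmin_leF (I : finType) (P : pred I) (F : I -> R) j :
  P j -> \big[Num.min/1]_(i | P i) F i <= F j.
Proof. exact: bigmin_le_cond. Qed.

Lemma le_eps (x z : R) : (forall e, 0 < e -> x <= z + e) -> x <= z.
Proof.
move=> H; rewrite leNgt; apply/negP => Hlt.
have := H ((x - z) / 2); rewrite divr_gt0 ?subr_gt0 // => /(_ isT).
lra.
Qed.

Lemma le_eps_small (x z d : R) : 0 < d ->
  (forall e, 0 < e -> e < d -> x <= z + e) -> x <= z.
Proof.
move=> d0 H; apply: le_eps => e e0.
have [ed|de] := ltP e d; first exact: H.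
apply: le_trans (H (d/2) _ _) _; [lra|lra|lra].
Qed.

Lemma term_le_sum (I : finType) (F : I -> R) j :
  (forall i, 0 <= F i) -> F j <= \sum_i F i.
Proof.
move=> H; rewrite (bigD1 j) //= lerDl; exact: sumr_ge0.
Qed.

Lemma two_le_sum (I : finType) (F : I -> R) i j : i != j ->
  (forall k, 0 <= F k) -> F i + F j <= \sum_k F k.
Proof.
move=> ij H; rewrite (bigD1 i) //= lerD2l (bigD1 j) /=; last by rewrite eq_sym.
rewrite lerDl; apply: sumr_ge0 => k _; exact: H.
Qed.

Lemma sum_pos (I : finType) (F : I -> R) j :
  (forall i, 0 <= F i) -> 0 < F j -> 0 < \sum_i F i.
Proof. move=> H Hj; exact: lt_le_trans Hj (term_le_sum _ H). Qed.

Lemma abs_le_sum (I : finType) (F : I -> R) j : `|F j| <= \sum_i `|F i|.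
Proof. by apply: term_le_sum => i; rewrite normr_ge0. Qed.

Lemma sum_close (I : finType) (F G : I -> R) d :
  (forall i, `|F i - G i| <= d i) -> `|\sum_i F i - \sum_i G i| <= \sum_i d i.
Proof.
move=> H; rewrite -sumrB; apply: le_trans (ler_norm_sum _ _ _) _.
by apply: ler_sum => i _.
Qed.

Lemma pick_indicator (I : finType) (F : I -> R) j :
  \sum_i F i * (i == j)%:R = F j.
Proof.
rewrite (bigD1 j) //= eqxx mulr1 big1 ?addr0 // => i /negbTE ->; by rewrite mulr0.
Qed.

End Helpers.

Section Dsum.
Variables (R : realType) (S : finType).

Definition dsum (mu : S -> S -> R) (F : S -> S -> R) := \sum_s \sum_a mu s a * F s a.

Lemma dsumD mu F G : dsum mu (fun s a => F s a + G s a) = dsum mu F + dsum mu G.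
Proof.
rewrite /dsum -big_split; apply: eq_bigr => s _; rewrite -big_split.
by apply: eq_bigr => a _; rewrite mulrDr.
Qed.

Lemma dsumZ mu c F : dsum mu (fun s a => c * F s a) = c * dsum mu F.
Proof.
rewrite /dsum mulr_sumr; apply: eq_bigr => s _; rewrite mulr_sumr.
by apply: eq_bigr => a _; rewrite mulrCA.
Qed.

Lemma dsum_ext mu F G : (forall s a, F s a = G s a) -> dsum mu F = dsum mu G.
Proof. by move=> H; apply: eq_bigr => s _; apply: eq_bigr => a _; rewrite H. Qed.

Lemma dsum_ge0 mu F : (forall s a, 0 <= mu s a) -> (forall s a, 0 <= F s a) ->
  0 <= dsum mu F.
Proof.
by move=> H1 H2; apply: sumr_ge0 => s _; apply: sumr_ge0 => a _; apply: mulr_ge0.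
Qed.

Lemma dsum_pos mu F s0 a0 : (forall s a, 0 <= mu s a) -> (forall s a, 0 <= F s a) ->
  0 < mu s0 a0 -> 0 < F s0 a0 -> 0 < dsum mu F.
Proof.
move=> H1 H2 h1 h2; apply: (@sum_pos _ _ _ s0).
  by move=> s; apply: sumr_ge0 => a _; apply: mulr_ge0.
apply: (@sum_pos _ _ _ a0); first by move=> a; apply: mulr_ge0.
exact: mulr_gt0.
Qed.

Lemma offdiag (m : S -> R) mu : inM m mu -> mu <> mu0 m ->
  exists s a, s != a /\ 0 < mu s a.
Proof.
move=> [H0 [_ [Hr _]]] Hne.
case/boolP: [exists p : S * S, (p.1 != p.2) && (0 < mu p.1 p.2)].
  by case/existsP => -[s a] /andP [h1 h2]; exists s, a.
move/existsPn => H; exfalso; apply: Hne.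
have Z : forall s a, s != a -> mu s a = 0.
  move=> s a sa; have := H (s, a); rewrite /= sa /=.
  by rewrite -leNgt => h; apply/eqP; rewrite eq_le h H0.
apply: functional_extensionality => s; apply: functional_extensionality => a; rewrite /mu0.
case: eqP => [<-|/eqP sa]; last exact: Z.
rewrite -Hr (bigD1 s) //= big1 ?addr0 // => a' /negbTE; rewrite eq_sym => h.
by apply: Z; rewrite h.
Qed.

End Dsum.

Section Part1.
Variables (R : realType) (S B : finType) (m : S -> R) (G : game R S B) (y : S -> B -> R) (eps : R).
Hypotheses (mpos : forall s, 0 < m s) (md : distrib m) (ys : strategy y)
  (C1y : C1 m G y) (C2y : C2 m G y) (eps0 : 0 < eps).
Variables (a0 a1 : S) (bb bo : B).
Hypotheses (yab : y a0 bb != y a1 bb) (bbo : bb != bo).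

Definition u1 := G.1.
Definition u2 := G.2.
Definition NB : R := (#|B|)%:R.
Definition nS : R := (#|S|)%:R.
Definition idx (s : S) : R := (enum_rank s : nat)%:R.
Definition beta s := u1 s bb - u1 s bo.
Definition dB := \big[Num.min/1]_(p : S * S | beta p.1 != beta p.2) `|beta p.1 - beta p.2|.
Definition gam := \big[Num.min/1]_(q : S * S * B | y q.1.1 q.2 != y q.1.2 q.2)
   `|y q.1.1 q.2 - y q.1.2 q.2|.
Definition e1 := Num.min eps 1.
Definition l2 := e1 / 2.
Definition lam := e1 * gam ^+ 2 * dB / (256 * (nS + 1)).
Definition rho s b : R := idx s * ((b == bb)%:R - (b == bo)%:R).
Definition ut s b := u1 s b + lam * rho s b.
Definition vt s b := ut s b - (\sum_b' ut s b') / NB.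
Definition Vt := \sum_s \sum_b `|vt s b|.
Definition kap := 1 / (NB * (Vt + 1)).
Definition z a b := 1 / NB + kap * vt a b.
Definition K2 := \sum_s \sum_b `|u2 s b|.
Definition pim := m a0 * m a1.
Definition th := l2 * pim * gam ^+ 2 / (64 * (2 * K2 + 1)).
Definition y' a b := (1 - th) * y a b + th * z a b.
Definition ybar b := \sum_a m a * y' a b.
Definition G' : game R S B :=
  (fun s b => ut s b + l2 * y' s b, fun s b => u2 s b + l2 * (y' s b - ybar b)).

Lemma NB_ge1 : 1 <= NB.
Proof. by rewrite /NB ler1n; apply/card_gt0P; exists bb. Qed.

Lemma nS_ge0 : 0 <= nS.
Proof. by rewrite /nS ler0n. Qed.

Lemma idx_bounds s : 0 <= idx s <= nS.
Proof.
rewrite /idx /nS ler0n /= ler_nat; apply: ltnW.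
exact: (ltn_ord (enum_rank s)).
Qed.

Lemma idx_inj s a : s != a -> idx s != idx a.
Proof.
move=> sa; rewrite /idx eqr_nat; apply/negP => /eqP h.
move/eqP: sa; apply; apply: enum_rank_inj; exact: val_inj.
Qed.

Lemma gam_pos : 0 < gam.
Proof. by apply: bigmin_pos => q; rewrite normr_gt0 subr_eq0. Qed.
Lemma gam_le1 : gam <= 1.
Proof. exact: bigmin_le1. Qed.
Lemma gam_le s a b : y s b != y a b -> gam <= `|y s b - y a b|.
Proof. by move=> h; apply: (@bigmin_leF _ _ _ _ (s, a, b)). Qed.

Lemma dB_pos : 0 < dB.
Proof. by apply: bigmin_pos => q; rewrite normr_gt0 subr_eq0. Qed.
Lemma dB_le1 : dB <= 1.
Proof. exact: bigmin_le1. Qed.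
Lemma dB_le s a : beta s != beta a -> dB <= `|beta s - beta a|.
Proof. by move=> h; apply: (@bigmin_leF _ _ _ _ (s, a)). Qed.

Lemma e1_pos : 0 < e1.
Proof. by rewrite /e1 lt_min eps0 ltr01. Qed.
Lemma e1_le1 : e1 <= 1.
Proof. by rewrite /e1 ge_min lexx orbT. Qed.
Lemma e1_le : e1 <= eps.
Proof. by rewrite /e1 ge_min lexx. Qed.

Lemma lamE : lam * (nS + 1) = e1 * gam ^+ 2 * dB / 256.
Proof. rewrite /lam; have := nS_ge0; move=> h; field; lra. Qed.

Lemma lam_pos : 0 < lam.
Proof.
rewrite /lam; apply: divr_gt0; last by have := nS_ge0; lra.
by apply: mulr_gt0; [apply: mulr_gt0; [exact: e1_pos | apply: exprn_gt0; exact: gam_pos] | exact: dB_pos].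
Qed.

Lemma lam_b1 : lam * (nS + 1) <= l2 * gam ^+ 2 / 128.
Proof.
rewrite lamE /l2; have := dB_le1; have := dB_pos; have := e1_pos; have := gam_pos => g0 e0 d0 d1.
have -> : e1 / 2 * gam ^+ 2 / 128 = e1 * gam ^+ 2 / 256 by field.
have : 0 <= e1 * gam ^+ 2 by apply: mulr_ge0; [lra | apply: exprn_ge0; lra].
set q := e1 * gam ^+ 2 => q0. nra.
Qed.

Lemma lam_b2 : lam * (nS + 1) <= dB / 256.
Proof.
rewrite lamE; have := dB_pos; have := e1_pos; have := e1_le1; have := gam_pos; have := gam_le1.
move=> g1 g0 e11 e0 d0.
have : e1 * gam ^+ 2 <= 1.
  rewrite -[1]mul1r; apply: ler_pM => //; [lra | by apply: exprn_ge0; lra|].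
  by rewrite expr_le1 //; lra.
have : 0 <= e1 * gam ^+ 2 by apply: mulr_ge0; [lra | apply: exprn_ge0; lra].
set q := e1 * gam ^+ 2 => q0 q1. nra.
Qed.

Lemma lam_b3 : lam * (nS + 1) <= e1 / 256.
Proof.
rewrite lamE; have := dB_pos; have := dB_le1; have := e1_pos; have := gam_pos; have := gam_le1.
move=> g1 g0 e0 d1 d0.
have -> : e1 * gam ^+ 2 * dB / 256 = e1 * (gam ^+ 2 * dB) / 256 by ring.
have : gam ^+ 2 <= 1 by rewrite expr_le1 //; lra.
have : 0 <= gam ^+ 2 by apply: exprn_ge0; lra.
set q := gam ^+ 2 => q0 q1.
have : q * dB <= 1 by nra.
have : 0 <= q * dB by nra.
set r := q * dB => r0 r1. nra.
Qed.


Lemma rho_sum s (F : B -> R) : \sum_b F b * rho s b = idx s * (F bb - F bo).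
Proof.
rewrite /rho; under eq_bigr do rewrite mulrCA mulrBr.
rewrite -mulr_sumr sumrB !pick_indicator; ring.
Qed.

Lemma ind_bound b : `|(b == bb)%:R - (b == bo)%:R : R| <= 1.
Proof.
case h1: (b == bb); case h2: (b == bo) => /=;
  rewrite ?subrr ?normr0 ?subr0 ?sub0r ?normrN ?normr1 ?ler01 //; by move: bbo; rewrite -(eqP h1) -(eqP h2) eqxx.
Qed.

Lemma rho_bound s b : `|rho s b| <= nS.
Proof.
rewrite /rho normrM; have := idx_bounds s => /andP [h0 h1].
rewrite ger0_norm //; rewrite -[nS]mulr1; apply: ler_pM => //.
exact: ind_bound.
Qed.

Lemma NB_pos : 0 < NB.
Proof. have := NB_ge1; lra. Qed.

Lemma sum_constB (c : R) : \sum_(b : B) c = c * NB.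
Proof. by rewrite sumr_const /NB mulr_natr. Qed.

Lemma vt_sum s : \sum_b vt s b = 0.
Proof.
rewrite /vt sumrB sum_constB; have := NB_pos => h; field; lra.
Qed.

Lemma vt_diff s : (vt s bb - vt s bo) = beta s + 2 * lam * idx s.
Proof.
rewrite /vt /ut /beta /rho !eqxx (negbTE bbo) eq_sym (negbTE bbo) /=; ring.
Qed.

Lemma ut_vt s (F : B -> R) : \sum_b F b = 0 ->
  \sum_b F b * ut s b = \sum_b F b * vt s b.
Proof.
move=> h; rewrite /vt; under [RHS]eq_bigr do rewrite mulrBr.
by rewrite sumrB -mulr_suml h mul0r subr0.
Qed.

Lemma Vt_ge0 : 0 <= Vt.
Proof. by apply: sumr_ge0 => s _; apply: sumr_ge0 => b _. Qed.

Lemma vt_le a b : `|vt a b| <= Vt.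
Proof.
apply: le_trans (_ : \sum_b `|vt a b| <= _).
  exact: abs_le_sum.
by apply: (@term_le_sum _ _ (fun s => \sum_b `|vt s b|) a) => s; apply: sumr_ge0.
Qed.

Lemma kap_pos : 0 < kap.
Proof. rewrite /kap; have := NB_pos; have := Vt_ge0 => h1 h2. apply: divr_gt0 => //. nra. Qed.

Lemma kap_vt a b : kap * `|vt a b| <= 1 / NB.
Proof.
have := vt_le a b; have := NB_pos; have := Vt_ge0 => h1 h2 h3.
have -> : 1 / NB = kap * (Vt + 1).
  rewrite /kap; move: h2; rewrite /NB => h2; field; apply/andP; split; apply: lt0r_neq0; lra.
apply: ler_wpM2l; [exact: ltW kap_pos | lra].
Qed.

Lemma invNB : 0 < 1 / NB <= 1.
Proof.
have := NB_ge1 => h; apply/andP; split; first by apply: divr_gt0; lra.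
by rewrite ler_pdivrMr; lra.
Qed.

Lemma kap_vt_abs a b : -1 / NB <= kap * vt a b <= 1 / NB.
Proof.
have : `|kap * vt a b| <= 1 / NB.
  by rewrite normrM (ger0_norm (ltW kap_pos)); exact: kap_vt.
rewrite ler_norml => /andP [h1 h2]; apply/andP; split => //.
by rewrite mulNr.
Qed.

Lemma z_strat : strategy z.
Proof.
move=> a; split.
  move=> b; rewrite /z; have := kap_vt_abs a b; rewrite mulNr; lra.
rewrite /z big_split /= sum_constB -mulr_sumr vt_sum mulr0 addr0.
have := NB_pos => h; field; lra.
Qed.

Lemma K2_ge0 : 0 <= K2.
Proof. by apply: sumr_ge0 => s _; apply: sumr_ge0 => b _. Qed.

Lemma pim_pos : 0 < pim.
Proof. exact: mulr_gt0. Qed.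

Lemma pim_le0 : pim <= m a0.
Proof. rewrite /pim; have := mpos a0; have := mpos a1; have := m_le1 a1 md; nra. Qed.

Lemma pim_le1 : pim <= m a1.
Proof. rewrite /pim; have := mpos a0; have := mpos a1; have := m_le1 a0 md; nra. Qed.

Lemma l2_pos : 0 < l2.
Proof. rewrite /l2; have := e1_pos; lra. Qed.

Lemma th_key : th * (2 * K2 + 1) * 64 = l2 * pim * gam ^+ 2.
Proof. rewrite /th; have := K2_ge0 => h; field; lra. Qed.

Lemma th_pos : 0 < th.
Proof.
rewrite /th; have := K2_ge0 => h; apply: divr_gt0; last lra.
apply: mulr_gt0; [exact: mulr_gt0 l2_pos pim_pos | apply: exprn_gt0; exact: gam_pos].
Qed.

Lemma th_small : th <= gam / 8 /\ th <= 1 / 2.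
Proof.
have k := th_key; have := K2_ge0; have := th_pos; have := gam_pos; have := gam_le1.
have := pim_le0; have := m_le1 a0 md; have := pim_pos; have := e1_le1; have := l2_pos.
move=> l0 e11 p0 m01 p1 g1 g0 t0 k0.
have hg : gam ^+ 2 <= gam by rewrite expr2 -[X in _ <= X]mulr1; apply: ler_wpM2l; lra.
have hp : pim <= 1 by lra.
have hl : l2 <= 1 by rewrite /l2; lra.
have h1 : l2 * pim <= 1 * 1 by apply: ler_pM; lra.
have h2 : l2 * pim * gam ^+ 2 <= 1 * gam.
  apply: ler_pM; [by apply: mulr_ge0; lra | by apply: exprn_ge0; lra | lra | lra].
set A := l2 * pim * gam ^+ 2 in k h2.
have h3 : th * 64 <= th * (2 * K2 + 1) * 64 by nra.
split; lra.
Qed.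

Lemma y'_strat : strategy y'.
Proof.
move=> a; have [y0 y1] := ys a; have [z0 z1] := z_strat a.
have [_ t1] := th_small; have t0 := th_pos.
split.
  by move=> b; rewrite /y'; have := y0 b; have := z0 b; nra.
rewrite /y' big_split /= -!mulr_sumr y1 z1; ring.
Qed.

Lemma strat_le1 (x : S -> B -> R) a b : strategy x -> x a b <= 1.
Proof.
move=> hx; have [x0 x1] := hx a; rewrite -x1; exact: term_le_sum.
Qed.

Lemma ybar_bounds b : 0 <= ybar b <= 1.
Proof.
have [m0 m1] := md; have hs := y'_strat.
apply/andP; split.
  by apply: sumr_ge0 => a _; apply: mulr_ge0 => //; have [h _] := hs a.
rewrite -m1; apply: ler_sum => a _; rewrite -[X in _ <= X]mulr1.
by apply: ler_wpM2l => //; apply: strat_le1.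
Qed.

Lemma dy'E s a b : y' s b - y' a b =
  (1 - th) * (y s b - y a b) + th * (kap * vt s b - kap * vt a b).
Proof. rewrite /y' /z; ring. Qed.

Lemma dy'_lower s a b : y s b != y a b -> gam ^+ 2 / 16 <= (y' s b - y' a b) ^+ 2.
Proof.
move=> h; have := gam_le h; rewrite ler_normr => hg.
have := kap_vt_abs s b; have := kap_vt_abs a b; have /andP [h1 h2] := invNB.
have [t1 t2] := th_small; have t0 := th_pos; have g0 := gam_pos; have g1 := gam_le1.
rewrite dy'E.
set X := y s b - y a b in hg *; set E1 := kap * vt s b; set E2 := kap * vt a b.
move=> /andP [e21 e22] /andP [e11 e12].
have hE : -2 <= E1 - E2 <= 2.
  by apply/andP; split; rewrite mulNr in e21 e11; lra.
move/andP: hE => [hE1 hE2].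
have hE' : - (gam / 4) <= th * (E1 - E2) <= gam / 4 by apply/andP; split; nra.
move/andP: hE' => [f1 f2].
set F := th * (E1 - E2) in f1 f2 *.
case/orP: hg => hg.
  have : gam / 4 <= (1 - th) * X + F by nra.
  move=> hh; have : 0 <= gam / 4 by lra. nra.
have : (1 - th) * X + F <= - (gam / 4) by nra.
move=> hh; have : 0 <= gam / 4 by lra. nra.
Qed.

Lemma near_G' : near_game eps G G'.
Proof.
move=> s b; rewrite /G' /=.
have [y0 _] := y'_strat s; have := y0 b; have := strat_le1 s b y'_strat.
have /andP [yb0 yb1] := ybar_bounds b.
have := rho_bound s b; have := lam_b3; have := lam_pos; have := e1_le; have := e1_pos.
have := nS_ge0; rewrite /l2 => n0 e0 ee l0 lb rb h1 h2.
have hr : `|lam * rho s b| <= lam * nS by rewrite normrM gtr0_norm //; apply: ler_wpM2l => //; lra.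
split.
  rewrite (_ : ut s b + _ - _ = lam * rho s b + e1 / 2 * y' s b); last first.
    by rewrite /ut /u1; ring.
  apply: le_lt_trans (ler_normD _ _) _.
  rewrite [`|e1 / 2 * _|]normrM (ger0_norm (_ : 0 <= e1 / 2)); last lra.
  rewrite (ger0_norm (y0 b)).
  have : lam * nS <= lam * (nS + 1) by apply: ler_wpM2l; lra.
  nra.
rewrite (_ : u2 s b + _ - _ = e1 / 2 * (y' s b - ybar b)); last by rewrite /u2; ring.
rewrite normrM (ger0_norm (_ : 0 <= e1 / 2)); last lra.
have : `|y' s b - ybar b| <= 1 by rewrite ler_norml; apply/andP; split; lra.
nra.
Qed.

Definition Aa s a := mixpay u1 s (y s) - mixpay u1 s (y a).
Definition Bp s a := \sum_b (y s b - y a b) * rho s b.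
Definition Cv s a := \sum_b vt s b * (vt s b - vt a b).
Definition Cy s a := \sum_b y' s b * (y' s b - y' a b).
Definition Qf s a := (1 - th) * lam * Bp s a +
   th * kap * ((\sum_b (vt s b - vt a b) ^+ 2) / 2) +
   l2 * ((\sum_b (y' s b - y' a b) ^+ 2) / 2).

Lemma T_decomp s a : mixpay G'.1 s (y' s) - mixpay G'.1 s (y' a) =
  (1 - th) * Aa s a + ((1 - th) * lam * Bp s a + th * kap * Cv s a + l2 * Cy s a).
Proof.
rewrite mixpay_sub /Aa mixpay_sub /Bp /Cv /Cy.
have hv : \sum_b (vt s b - vt a b) * ut s b = \sum_b (vt s b - vt a b) * vt s b.
  apply: ut_vt; by rewrite sumrB !vt_sum subrr.
have -> : \sum_b vt s b * (vt s b - vt a b) = \sum_b (vt s b - vt a b) * ut s b.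
  by rewrite hv; apply: eq_bigr => b _; rewrite mulrC.
rewrite !mulr_sumr -!big_split /=; apply: eq_bigr => b _.
rewrite /G' /= /ut /u1 dy'E; ring.
Qed.

Lemma Qf_pos s a : s != a -> 0 < Qf s a.
Proof.
move=> sa.
have t0 := th_pos; have [t1 t2] := th_small; have k0 := kap_pos; have l0 := lam_pos.
have L0 := l2_pos.
have hv : 0 <= \sum_b (vt s b - vt a b) ^+ 2 by apply: sumr_ge0 => b _; apply: sqr_ge0.
have hy : 0 <= \sum_b (y' s b - y' a b) ^+ 2 by apply: sumr_ge0 => b _; apply: sqr_ge0.
rewrite /Qf /Bp rho_sum.
case/boolP: [forall b, y s b == y a b] => [/forallP hall|].
  have -> : y s bb - y a bb = 0 by rewrite (eqP (hall bb)) subrr.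
  have -> : y s bo - y a bo = 0 by rewrite (eqP (hall bo)) subrr.
  rewrite subrr !mulr0 add0r.
  have D : (vt s bb - vt a bb) - (vt s bo - vt a bo) != 0.
    have -> : (vt s bb - vt a bb) - (vt s bo - vt a bo) =
        (vt s bb - vt s bo) - (vt a bb - vt a bo) by ring.
    rewrite !vt_diff.
    have /andP [is0 is1] := idx_bounds s; have /andP [ia0 ia1] := idx_bounds a.
    have hi := idx_inj sa.
    case/boolP: (beta s == beta a) => [/eqP hb|hb].
      rewrite hb.
      have -> : beta a + 2 * lam * idx s - (beta a + 2 * lam * idx a) =
        (2 * lam) * (idx s - idx a) by ring.
      rewrite mulf_neq0 // ?subr_eq0 //; apply: lt0r_neq0; lra.
    have := dB_le hb; rewrite ler_normr => hd.
    have := lam_b2; have := dB_pos => d0 lb.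
    have h1 : lam * (idx s - idx a) <= lam * nS by apply: ler_wpM2l; lra.
    have h2 : - (lam * nS) <= lam * (idx s - idx a).
      rewrite -mulrN; apply: ler_wpM2l; lra.
    have h3 : lam * nS <= lam * (nS + 1) by apply: ler_wpM2l; lra.
    apply/eqP => E.
    case/orP: hd => hd; nra.
  have : 0 < (vt s bb - vt a bb) ^+ 2 + (vt s bo - vt a bo) ^+ 2.
    set X := vt s bb - vt a bb in D *; set W := vt s bo - vt a bo in D *.
    have : 0 < (X - W) ^+ 2 by rewrite exprn_even_gt0.
    nra.
  have := @two_le_sum _ _ (fun b => (vt s b - vt a b) ^+ 2) bb bo bbo (fun b => sqr_ge0 _).
  move=> h2 h3.
  have : 0 < th * kap by apply: mulr_gt0.
  set tk := th * kap. nra.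
move/forallPn => [b' hb'].
have hsq := dy'_lower hb'.
have := @term_le_sum _ _ (fun b => (y' s b - y' a b) ^+ 2) b' (fun b => sqr_ge0 _).
move=> /= hs.
have /andP [is0 is1] := idx_bounds s.
have hyb : forall b, -1 <= y s b - y a b <= 1.
  move=> b; have [ys0 _] := ys s; have [ya0 _] := ys a.
  have := strat_le1 s b ys; have := strat_le1 a b ys; have := ys0 b; have := ya0 b.
  move=> *; apply/andP; split; lra.
have /andP [p1 p2] := hyb bb; have /andP [p3 p4] := hyb bo.
set D := y s bb - y a bb - (y s bo - y a bo).
have hD : -2 <= D <= 2 by apply/andP; split; rewrite /D; lra.
move/andP: hD => [hD1 hD2].
have hB : - (2 * nS) <= idx s * D by nra.
have hlB : - (lam * (2 * nS)) <= lam * (idx s * D) by rewrite -mulrN; apply: ler_wpM2l; lra.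
have := lam_b1 => lb1.
have h3 : lam * nS <= lam * (nS + 1) by apply: ler_wpM2l; lra.
have : 0 <= th * kap * ((\sum_b (vt s b - vt a b) ^+ 2) / 2).
  apply: mulr_ge0; [apply: mulr_ge0; lra | lra].
set K := th * kap * _.
have h4 : (1 - th) * lam * (idx s * D) >= - (lam * (2 * nS)).
  have : 0 <= 1 - th by lra.
  have : 1 - th <= 1 by lra.
  set c := 1 - th; set q := lam * (idx s * D) in hlB *.
  have -> : c * lam * (idx s * D) = c * q by rewrite /q; ring.
  have : 0 <= lam * (2 * nS) by apply: mulr_ge0; [lra | have := nS_ge0; lra].
  set L := lam * (2 * nS) in hlB *. nra.
set Y := \sum_b (y' s b - y' a b) ^+ 2 in hy hs *.
have g0 := gam_pos.
have : l2 * (gam ^+ 2 / 16) <= l2 * Y by apply: ler_wpM2l; lra.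
move=> h5 h6. 
have : 0 < l2 * gam ^+ 2 by apply: mulr_gt0 => //; apply: exprn_gt0.
nra.
Qed.

Lemma Qf_ge0 s a : 0 <= Qf s a.
Proof.
case: (eqVneq s a) => [<-|sa]; last exact: ltW (Qf_pos sa).
rewrite /Qf /Bp; under eq_bigr do rewrite subrr mul0r.
rewrite big1 // mulr0 add0r.
have t0 := th_pos; have k0 := kap_pos; have L0 := l2_pos.
have hv : 0 <= (\sum_b (vt s b - vt s b) ^+ 2) / 2.
  by apply: divr_ge0; [apply: sumr_ge0 => b _; apply: sqr_ge0 | lra].
have hy : 0 <= (\sum_b (y' s b - y' s b) ^+ 2) / 2.
  by apply: divr_ge0; [apply: sumr_ge0 => b _; apply: sqr_ge0 | lra].
apply: addr_ge0; apply: mulr_ge0 => //; try lra; apply: mulr_ge0; lra.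
Qed.

Lemma D1_G' : D1 m G' y'.
Proof.
move=> mu HM Hne.
have [mu0' _] := HM.
rewrite -subr_gt0 Upay_diff //.
change (0 < dsum mu (fun s a => mixpay G'.1 s (y' s) - mixpay G'.1 s (y' a))).
rewrite (dsum_ext mu T_decomp) dsumD dsumZ.
have hA : 0 <= dsum mu Aa.
  rewrite /dsum /Aa -(@Upay_diff _ _ _ m mu u1 y HM) subr_ge0; exact: C1y.
have -> : dsum mu (fun s a => (1 - th) * lam * Bp s a + th * kap * Cv s a + l2 * Cy s a)
    = dsum mu Qf.
  rewrite !dsumD !dsumZ /Qf.
  by rewrite /dsum /Cv /Cy (@sq_ident _ _ _ m mu vt HM) (@sq_ident _ _ _ m mu y' HM).
have [s [a [sa hm]]] := offdiag HM Hne.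
have hQ := dsum_pos mu0' Qf_ge0 hm (Qf_pos sa).
have [_ t2] := th_small.
have : 0 <= (1 - th) * dsum mu Aa by apply: mulr_ge0 => //; lra.
lra.
Qed.

Lemma mixpay_comb (v : S -> B -> R) s (x w : B -> R) (al be : R) :
  mixpay v s (fun b => al * x b + be * w b) = al * mixpay v s x + be * mixpay v s w.
Proof.
rewrite /mixpay !mulr_sumr -big_split /=; apply: eq_bigr => b _; ring.
Qed.

Lemma v2_G' : v2 m G' = v2 m G.
Proof.
apply: v2_ext => b; rewrite /G' /=.
have [_ m1] := md.
under eq_bigr do rewrite mulrDr.
rewrite big_split /= -[RHS]addr0; congr (_ + _).
under eq_bigr do rewrite mulrCA mulrBr.
rewrite -mulr_sumr sumrB -mulr_suml m1 mul1r subrr mulr0 //.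
Qed.

Lemma wsum_bound (w : S -> B -> R) : (forall s b, 0 <= w s b <= 1) ->
  - K2 <= \sum_s \sum_b w s b * u2 s b <= K2.
Proof.
move=> hw.
have h : forall s b, - `|u2 s b| <= w s b * u2 s b <= `|u2 s b|.
  move=> s b; have /andP [w0 w1] := hw s b.
  have := ler_norm (u2 s b) => hu.
  have hn : - `|u2 s b| <= u2 s b.
    by rewrite lerNl; apply: le_trans (ler_norm _) _; rewrite normrN.
  have n0 : 0 <= `|u2 s b| by [].
  apply/andP; split; nra.
apply/andP; split.
  rewrite /K2 -sumrN; apply: ler_sum => s _; rewrite -sumrN; apply: ler_sum => b _.
  by have /andP [] := h s b.
rewrite /K2; apply: ler_sum => s _; apply: ler_sum => b _.
by have /andP [] := h s b.
Qed.

Lemma SS_eq : \sum_s m s * \sum_b y' s b * (y' s b - ybar b) =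
  \sum_s m s * \sum_b (y' s b - ybar b) ^+ 2.
Proof.
have [m0 m1] := md.
apply/eqP; rewrite -subr_eq0 -sumrB; apply/eqP.
transitivity (\sum_s m s * \sum_b ybar b * (y' s b - ybar b)).
  apply: eq_bigr => s _; rewrite -mulrBr -sumrB; congr (_ * _).
  by apply: eq_bigr => b _; ring.
under eq_bigr do rewrite mulr_sumr.
rewrite exchange_big /=; apply: big1 => b _.
under eq_bigr do rewrite mulrCA mulrBr.
by rewrite -mulr_sumr sumrB -mulr_suml m1 mul1r -/(ybar b) subrr mulr0.
Qed.

Lemma a01 : a0 != a1.
Proof. by apply/eqP => h; move: yab; rewrite h eqxx. Qed.

Lemma SS_lower : pim * (gam ^+ 2 / 32) <= \sum_s m s * \sum_b (y' s b - ybar b) ^+ 2.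
Proof.
set F := fun s => m s * \sum_b (y' s b - ybar b) ^+ 2.
have F0 : forall s, 0 <= F s.
  by move=> s; apply: mulr_ge0; [exact: ltW | apply: sumr_ge0 => b _; apply: sqr_ge0].
have h2 := @two_le_sum _ _ F a0 a1 a01 F0.
have t : forall s, m s * (y' s bb - ybar bb) ^+ 2 <= F s.
  move=> s; apply: ler_wpM2l; first exact: ltW.
  exact: (@term_le_sum _ _ (fun b => (y' s b - ybar b) ^+ 2) bb (fun b => sqr_ge0 _)).
have := t a0; have := t a1; have := dy'_lower yab.
have := pim_le0; have := pim_le1; have := pim_pos.
set X := y' a0 bb - ybar bb; set W := y' a1 bb - ybar bb.
have -> : y' a0 bb - y' a1 bb = X - W by rewrite /X /W; ring.
move=> p0 p1 p2 hd t1 t0.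
have hX : 0 <= X ^+ 2 by apply: sqr_ge0.
have hW : 0 <= W ^+ 2 by apply: sqr_ge0.
have h3 : pim * X ^+ 2 <= m a0 * X ^+ 2 by apply: ler_wpM2r.
have h4 : pim * W ^+ 2 <= m a1 * W ^+ 2 by apply: ler_wpM2r.
have h5 : (X - W) ^+ 2 <= 2 * (X ^+ 2 + W ^+ 2).
  have : 0 <= (X + W) ^+ 2 by apply: sqr_ge0.
  rewrite !expr2; nra.
have h6 : pim * (gam ^+ 2 / 16) <= pim * (2 * (X ^+ 2 + W ^+ 2)).
  apply: ler_wpM2l; [lra | exact: le_trans hd h5].
rewrite -/(F a0) -/(F a1) in t0 t1 *.
apply: le_trans h2. nra.
Qed.

Lemma D2_G' : D2 m G' y'.
Proof.
rewrite /D2 v2_G' Upay_mu0.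
have [m0 m1] := md.
have e : forall s, mixpay G'.2 s (y' s) = ((1 - th) * mixpay u2 s (y s) + th * mixpay u2 s (z s))
     + l2 * \sum_b y' s b * (y' s b - ybar b).
  move=> s; rewrite -mixpay_comb.
  rewrite /mixpay /G' /= mulr_sumr -big_split /=; apply: eq_bigr => b _.
  rewrite /y' /u2; ring.
under eq_bigr do rewrite e mulrDr.
rewrite big_split /=.
have -> : \sum_s m s * (l2 * \sum_b y' s b * (y' s b - ybar b)) =
    l2 * \sum_s m s * \sum_b y' s b * (y' s b - ybar b).
  by rewrite mulr_sumr; apply: eq_bigr => s _; ring.
rewrite SS_eq.
have hU : \sum_s m s * ((1 - th) * mixpay u2 s (y s) + th * mixpay u2 s (z s)) =
   (1 - th) * Upay u2 (mu0 m) y + th * \sum_s \sum_b (m s * z s b) * u2 s b.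
  rewrite Upay_mu0 [X in _ = X + _]mulr_sumr [X in _ = _ + X]mulr_sumr -big_split /=.
  apply: eq_bigr => s _.
  have -> : \sum_b (m s * z s b) * u2 s b = m s * mixpay u2 s (z s).
    by rewrite /mixpay mulr_sumr; apply: eq_bigr => b _; ring.
  ring.
rewrite hU.
have hC2 : v2 m G <= Upay u2 (mu0 m) y := C2y.
have hZ := @wsum_bound (fun s b => m s * z s b).
have /andP [hZ1 _] : - K2 <= \sum_s \sum_b (m s * z s b) * u2 s b <= K2.
  apply: hZ => s b; have [z0 _] := z_strat s.
  apply/andP; split; first by apply: mulr_ge0; [exact: ltW | exact: z0].
  have := strat_le1 s b z_strat; have := m_le1 s md; have := z0 b; have := mpos s. nra.
have [bm hbm] := v2_attain m G bb.
have hv2 : v2 m G <= K2.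
  have hw : forall s b, 0 <= m s * (b == bm)%:R <= 1.
    move=> s b; apply/andP; split.
      by apply: mulr_ge0; [exact: ltW | exact: ler0n].
    have := m_le1 s md; case: (b == bm) => /=; rewrite ?mulr1 ?mulr0 //.
  have /andP [_ h] := wsum_bound hw.
  apply: le_trans hbm _; apply: le_trans h.
  rewrite le_eqVlt; apply/orP; left; apply/eqP.
  apply: eq_bigr => s _; rewrite -(pick_indicator (fun b => m s * u2 s b) bm).
  by apply: eq_bigr => b _; rewrite /u2; ring.
have := SS_lower; have := th_key; have [_ t2] := th_small; have := th_pos.
have := K2_ge0; have := l2_pos.
set U := Upay u2 (mu0 m) y in hC2 *.
set Zs := \sum_s \sum_b (m s * z s b) * u2 s b in hZ1 *.
set SS := \sum_s m s * \sum_b (y' s b - ybar b) ^+ 2.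
move=> L0 k0 t0 tk hs.
have hA : 0 <= (1 - th) * (U - v2 m G) by apply: mulr_ge0; lra.
have hB : th * (Zs - v2 m G) >= - (th * (2 * K2)).
  rewrite -mulrN; apply: ler_wpM2l; lra.
have hC : l2 * (pim * (gam ^+ 2 / 32)) <= l2 * SS by apply: ler_wpM2l; lra.
have hD : th * (2 * K2) < l2 * (pim * (gam ^+ 2 / 32)).
  have : 0 < l2 * pim * gam ^+ 2.
    apply: mulr_gt0; [exact: mulr_gt0 L0 pim_pos | apply: exprn_gt0; exact: gam_pos].
  nra.
nra.
Qed.

Lemma part1_main : exists G'' : game R S B, near_game eps G G'' /\ exists w, Ehat m G'' w.
Proof.
exists G'; split; first exact: near_G'.
exists (Upay G'.1 (mu0 m) y', Upay G'.2 (mu0 m) y'); exists y'.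
by split; [exact: y'_strat | split; [exact: D1_G' | split; [exact: D2_G' | ]]].
Qed.

End Part1.

Lemma part1 (R : realType) (S B : finType) (m : S -> R) (G : game R S B) :
  (forall s, 0 < m s) -> distrib m -> condB m G ->
  forall eps : R, 0 < eps ->
    exists G' : game R S B, near_game eps G G' /\ exists w, Ehat m G' w.
Proof.
move=> mpos md [y [ys [[a0 [a1 ya]] [c1 c2]]]] eps eps0.
have [bb hb] : exists b, y a0 b != y a1 b.
  case/boolP: [exists b, y a0 b != y a1 b] => [/existsP //|/existsPn H].
  exfalso; apply: ya; apply: functional_extensionality => b.
  by have := H b; rewrite negbK => /eqP.
have [bo hbo] : exists b, bb != b.
  case/boolP: [exists b, bb != b] => [/existsP //|/existsPn H].
  exfalso; have [y0 y1] := ys a0; have [z0 z1] := ys a1.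
  have E : forall (x : S -> B -> R) a, \sum_b x a b = x a bb.
    move=> x a; rewrite (bigD1 bb) //= big1 ?addr0 // => b hb'.
    by have := H b; rewrite negbK => /eqP hh; move: hb'; rewrite -hh eqxx.
  by move: hb; rewrite -E y1 -E z1 eqxx.
exact: (part1_main mpos md ys c1 c2 eps0 hb hbo).
Qed.


Section NProp.
Variables (R : realType) (S B : finType).

Definition NBb : R := (#|B|)%:R.
Definition KK : R := (#|{: S * B}|)%:R.

Definition NProp (m : S -> R) (G : game R S B) (c : B -> R) (tau : R) (e : S -> B -> R) : Prop :=
  ((forall b, 0 <= c b) /\ \sum_b c b = 1) /\
  (0 < tau /\ tau <= KK) /\
  ((forall a b, `|e a b| <= 1) /\ (forall a, \sum_b e a b = 0)) /\
  (forall b, (forall a, 0 <= e a b) \/ 1 / NBb <= c b) /\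
  (exists a a' b, 1 / KK <= e a b - e a' b) /\
  (forall mu, inM m mu -> 0 <= dsum mu (fun s a => mixpay G.1 s (e s) - mixpay G.1 s (e a))) /\
  (0 <= \sum_s m s * mixpay G.2 s (e s)) /\
  (v2 m G <= \sum_s m s * mixpay G.2 s c + tau * \sum_s m s * mixpay G.2 s (e s)) /\
  (forall a b, 0 <= c b + tau * e a b).

Lemma sum_constSB (x : R) : \sum_(p : S * B) x = x * KK.
Proof. by rewrite sumr_const /KK mulr_natr. Qed.

Lemma sum_constB' (x : R) : \sum_(b : B) x = x * NBb.
Proof. by rewrite sumr_const /NBb mulr_natr. Qed.

End NProp.

Section Norm.
Variables (R : realType) (S B : finType) (m : S -> R) (G : game R S B) (y : S -> B -> R).
Hypotheses (md : distrib m) (ys : strategy y) (C1y : C1 m G y) (C2y : C2 m G y).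
Variables (a0 a1 : S) (b0 : B).
Hypothesis (ya : y a0 <> y a1).

Definition amin b := [arg min_(a < a0) y a b]%O.
Definition mn b := y (amin b) b.
Definition bs := [arg max_(b > b0) y a0 b]%O.
Definition rr := 1 - \sum_b mn b.
Definition cc b := mn b + (b == bs)%:R * rr.
Definition tau := \sum_a \sum_b (y a b - mn b).
Definition ee a b := (y a b - cc b) / tau.

Lemma mn_le a b : mn b <= y a b.
Proof. by rewrite /mn /amin; case: arg_minP => // i _ H; apply: H. Qed.

Lemma bs_max b : y a0 b <= y a0 bs.
Proof. by rewrite /bs; case: arg_maxP => // i _ H; apply: H. Qed.

Lemma y_ge0 a b : 0 <= y a b.
Proof. by have [h _] := ys a; apply: h. Qed.

Lemma y_le1 a b : y a b <= 1.
Proof. by have [h1 h2] := ys a; rewrite -h2; apply: term_le_sum. Qed.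

Lemma mn_ge0 b : 0 <= mn b.
Proof. exact: y_ge0. Qed.

Lemma d_ge0 a b : 0 <= y a b - mn b.
Proof. by rewrite subr_ge0 mn_le. Qed.

Lemma rr_ge0 : 0 <= rr.
Proof.
rewrite /rr subr_ge0; have [_ h] := ys a0; rewrite -h.
by apply: ler_sum => b _; apply: mn_le.
Qed.

Lemma cc_ge0 b : 0 <= cc b.
Proof. by rewrite /cc; apply: addr_ge0; [exact: mn_ge0 | apply: mulr_ge0; [exact: ler0n | exact: rr_ge0]]. Qed.

Lemma cc_sum : \sum_b cc b = 1.
Proof.
rewrite /cc big_split /=.
have -> : \sum_b (b == bs)%:R * rr = rr.
  rewrite (eq_bigr (fun b => rr * (b == bs)%:R)); last by move=> b _; rewrite mulrC.
  exact: (pick_indicator (fun _ => rr) bs).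
rewrite /rr; ring.
Qed.

Lemma cc_other b : b != bs -> cc b = mn b.
Proof. by move=> /negbTE h; rewrite /cc h mul0r addr0. Qed.

Lemma tau_ge0 : 0 <= tau.
Proof. by apply: sumr_ge0 => a _; apply: sumr_ge0 => b _; apply: d_ge0. Qed.

Lemma tau_neq0 : tau != 0.
Proof.
apply/eqP => h; apply: ya.
have h1 : forall a, \sum_b (y a b - mn b) = 0.
  move=> a; apply: (psumr_eq0P _ h) => // a' _.
  by apply: sumr_ge0 => b _; apply: d_ge0.
have h2 : forall a b, y a b = mn b.
  move=> a b; apply/eqP; rewrite -subr_eq0; apply/eqP.
  by apply: (psumr_eq0P _ (h1 a)) => // b' _; apply: d_ge0.
by apply: functional_extensionality => b; rewrite !h2.
Qed.

Lemma tau_pos : 0 < tau.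
Proof. by rewrite lt0r tau_neq0 tau_ge0. Qed.

Lemma tau_pair : tau = \sum_(p : S * B) (y p.1 p.2 - mn p.2).
Proof. by rewrite /tau pair_big. Qed.

Lemma tau_le : tau <= KK R S B.
Proof.
rewrite tau_pair -[KK R S B]mul1r -sum_constSB; apply: ler_sum => p _.
have := mn_ge0 p.2; have := y_le1 p.1 p.2; lra.
Qed.

Lemma row_le_tau a : \sum_b (y a b - mn b) <= tau.
Proof.
apply: (@term_le_sum _ _ (fun a => \sum_b (y a b - mn b)) a).
by move=> a'; apply: sumr_ge0 => b _; apply: d_ge0.
Qed.

Lemma diff_bound a b : `|y a b - cc b| <= tau.
Proof.
have Hrow := row_le_tau a.
case: (eqVneq b bs) => [->|hb].
  have hs : \sum_b (y a b - cc b) = 0.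
    by rewrite sumrB cc_sum; have [_ ->] := ys a; rewrite subrr.
  rewrite (bigD1 bs) //= in hs.
  have e : \sum_(b | b != bs) (y a b - cc b) = \sum_(b | b != bs) (y a b - mn b).
    by apply: eq_bigr => i hi; rewrite cc_other.
  rewrite e in hs.
  have h0 : 0 <= \sum_(b | b != bs) (y a b - mn b) by apply: sumr_ge0 => i _; apply: d_ge0.
  have h1 : \sum_(b | b != bs) (y a b - mn b) <= \sum_b (y a b - mn b).
    rewrite [X in _ <= X](bigD1 bs) //= lerDr; exact: d_ge0.
  rewrite ler_norml; apply/andP; split; lra.
rewrite cc_other // ger0_norm ?d_ge0 //.
apply: le_trans Hrow.
exact: (@term_le_sum _ _ (fun b => y a b - mn b) b (d_ge0 a)).
Qed.

Lemma yE a b : y a b = cc b + tau * ee a b.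
Proof. rewrite /ee; have := tau_neq0 => h; field. exact: h. Qed.

Lemma ee_bound a b : `|ee a b| <= 1.
Proof.
rewrite /ee normrM normfV (gtr0_norm tau_pos) ler_pdivrMr ?tau_pos // mul1r.
exact: diff_bound.
Qed.

Lemma ee_sum a : \sum_b ee a b = 0.
Proof.
rewrite /ee -mulr_suml sumrB cc_sum; have [_ ->] := ys a; by rewrite subrr mul0r.
Qed.

Lemma F4 b : (forall a, 0 <= ee a b) \/ 1 / NBb R B <= cc b.
Proof.
case: (eqVneq b bs) => [->|hb]; [right|left]; last first.
  move=> a; rewrite /ee cc_other //; apply: divr_ge0; [exact: d_ge0 | exact: tau_ge0].
have h1 : cc bs = 1 - \sum_(b | b != bs) mn b.
  rewrite /cc eqxx mul1r /rr (bigD1 bs) //=; ring.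
have h2 : \sum_(b | b != bs) mn b <= \sum_(b | b != bs) y a0 b.
  by apply: ler_sum => i _; apply: mn_le.
have h3 : 1 = y a0 bs + \sum_(b | b != bs) y a0 b.
  by have [_ h] := ys a0; rewrite -h (bigD1 bs).
have h4 : 1 <= y a0 bs * NBb R B.
  have [_ h] := ys a0; rewrite -h -sum_constB'; apply: ler_sum => i _; exact: bs_max.
have hN : 0 < NBb R B by rewrite /NBb ltr0n; apply/card_gt0P; exists b0.
rewrite h1.
have : 1 / NBb R B <= y a0 bs by rewrite ler_pdivrMr // mulrC.
lra.
Qed.

Lemma F5 : exists a a' b, 1 / KK R S B <= ee a b - ee a' b.
Proof.
have [p hp] := @exmax _ _ (a0, b0) (fun p : S * B => y p.1 p.2 - mn p.2).
exists p.1, (amin p.2), p.2.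
have hK : 0 < KK R S B by rewrite /KK ltr0n; apply/card_gt0P; exists (a0, b0).
have ht : tau <= (y p.1 p.2 - mn p.2) * KK R S B.
  rewrite tau_pair -sum_constSB; apply: ler_sum => q _; exact: hp.
have -> : ee p.1 p.2 - ee (amin p.2) p.2 = (y p.1 p.2 - mn p.2) / tau.
  rewrite /ee /mn; have := tau_neq0 => h; field; exact: h.
rewrite ler_pdivlMr ?tau_pos //.
have -> : 1 / KK R S B * tau = tau / KK R S B by rewrite mulrC mulrA mulr1.
by rewrite ler_pdivrMr.
Qed.

Lemma mixpay_y s a : mixpay G.1 s (y s) - mixpay G.1 s (y a) =
  tau * (mixpay G.1 s (ee s) - mixpay G.1 s (ee a)).
Proof.
rewrite !mixpay_sub mulr_sumr; apply: eq_bigr => b _; rewrite !yE; ring.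
Qed.

Lemma F6 mu : inM m mu -> 0 <= dsum mu (fun s a => mixpay G.1 s (ee s) - mixpay G.1 s (ee a)).
Proof.
move=> HM; have := C1y HM; rewrite -subr_ge0 Upay_diff //.
change ((0 <= dsum mu (fun s a => mixpay G.1 s (y s) - mixpay G.1 s (y a))) ->
  0 <= dsum mu (fun s a => mixpay G.1 s (ee s) - mixpay G.1 s (ee a))).
rewrite (dsum_ext mu mixpay_y) dsumZ pmulr_rge0 //; exact: tau_pos.
Qed.

Lemma U2_split : Upay G.2 (mu0 m) y =
  \sum_s m s * mixpay G.2 s cc + tau * \sum_s m s * mixpay G.2 s (ee s).
Proof.
rewrite Upay_mu0 mulr_sumr -big_split /=; apply: eq_bigr => s _.
have -> : mixpay G.2 s (y s) = mixpay G.2 s (fun b => cc b + tau * ee s b).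
  by rewrite /mixpay; apply: eq_bigr => b _; rewrite -yE.
rewrite mixpay_lin; ring.
Qed.

Lemma F78 : 0 <= \sum_s m s * mixpay G.2 s (ee s) /\
  v2 m G <= \sum_s m s * mixpay G.2 s cc + tau * \sum_s m s * mixpay G.2 s (ee s).
Proof.
have h := C2y; rewrite /C2 U2_split in h.
have hA := A_le_v2 m G cc_ge0 cc_sum.
split => //.
have : 0 <= tau * \sum_s m s * mixpay G.2 s (ee s) by lra.
by rewrite pmulr_rge0 // tau_pos.
Qed.

Lemma normalize_main : NProp m G cc tau ee.
Proof.
split; first by split; [exact: cc_ge0 | exact: cc_sum].
split; first by split; [exact: tau_pos | exact: tau_le].
split; first by split; [exact: ee_bound | exact: ee_sum].
split; first exact: F4.
split; first exact: F5.
split; first exact: F6.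
have [h7 h8] := F78.
split => //; split => //.
move=> a b; rewrite -yE; exact: y_ge0.
Qed.

End Norm.

Section Tools.
Variables (R : realType) (S B : finType).

Lemma le_epsK (x z K d : R) : 0 <= K -> 0 < d ->
  (forall e, 0 < e -> e < d -> x <= z + K * e) -> x <= z.
Proof.
move=> K0 d0 H; apply: (@le_eps_small _ x z (d * (K + 1))); first by apply: mulr_gt0; lra.
move=> e e0 ed.
have K1 : 0 < K + 1 by lra.
have h1 : 0 < e / (K + 1) by apply: divr_gt0.
have h2 : e / (K + 1) < d by rewrite ltr_pdivrMr.
apply: le_trans (H _ h1 h2) _.
rewrite lerD2l.
have -> : K * (e / (K + 1)) = e * (K / (K + 1)) by field; lra.
have : K / (K + 1) <= 1 by rewrite ler_pdivrMr //; lra.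
nra.
Qed.

Lemma abs_lt2 (x z e : R) : `|x - z| < e -> x < z + e /\ z < x + e.
Proof. by rewrite ltr_norml => /andP [h1 h2]; split; lra. Qed.

Lemma mixpay_close (v v' : S -> B -> R) s (x x' : B -> R) e :
  (forall b, `|x' b| <= 1) -> (forall b, `|x' b - x b| <= e) ->
  (forall b, `|v' s b - v s b| <= e) ->
  `|mixpay v' s x' - mixpay v s x| <= e * \sum_b (1 + `|v s b|).
Proof.
move=> h1 h2 h3; rewrite /mixpay mulr_sumr.
suff H : forall b, `|x' b * v' s b - x b * v s b| <= e * (1 + `|v s b|).
  exact: (sum_close H).
move=> b.
have -> : x' b * v' s b - x b * v s b = x' b * (v' s b - v s b) + (x' b - x b) * v s b by ring.
apply: le_trans (ler_normD _ _) _.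
rewrite !normrM.
have := h1 b; have := h2 b; have := h3 b; have := normr_ge0 (x' b); have := normr_ge0 (v s b).
have := normr_ge0 (x' b - x b); have := normr_ge0 (v' s b - v s b).
set A := `|x' b|; set Bv := `|v s b|; set C := `|x' b - x b|; set D := `|v' s b - v s b|.
nra.
Qed.

Definition Kv (v : S -> B -> R) := \sum_s \sum_b (1 + `|v s b|).

Lemma Kv_ge0 v : 0 <= Kv v.
Proof. by apply: sumr_ge0 => s _; apply: sumr_ge0 => b _; apply: addr_ge0. Qed.

Lemma Kv_le v s : \sum_b (1 + `|v s b|) <= Kv v.
Proof.
apply: (@term_le_sum _ _ (fun s => \sum_b (1 + `|v s b|)) s).
by move=> s'; apply: sumr_ge0 => b _; apply: addr_ge0.
Qed.

Lemma mixpay_closeK (v v' : S -> B -> R) s (x x' : B -> R) e : 0 <= e ->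
  (forall b, `|x' b| <= 1) -> (forall b, `|x' b - x b| <= e) ->
  (forall b, `|v' s b - v s b| <= e) ->
  `|mixpay v' s x' - mixpay v s x| <= e * Kv v.
Proof.
move=> e0 h1 h2 h3; apply: le_trans (mixpay_close h1 h2 h3) _.
by apply: ler_wpM2l => //; apply: Kv_le.
Qed.

Lemma dsum_close (m : S -> R) mu (F F' : S -> S -> R) d : inM m mu ->
  (forall s a, `|F' s a - F s a| <= d) -> `|dsum mu F' - dsum mu F| <= d.
Proof.
move=> [h0 [h1 _]] H.
have Hs : forall s, `|\sum_a mu s a * F' s a - \sum_a mu s a * F s a| <= \sum_a mu s a * d.
  move=> s.
  suff Ha : forall a, `|mu s a * F' s a - mu s a * F s a| <= mu s a * d by exact: (sum_close Ha).
  move=> a; rewrite -mulrBr normrM ger0_norm //; apply: ler_wpM2l => //.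
rewrite /dsum; apply: le_trans (sum_close Hs) _.
rewrite le_eqVlt; apply/orP; left; apply/eqP.
under eq_bigr do rewrite -mulr_suml.
by rewrite -mulr_suml h1 mul1r.
Qed.

Lemma msum_close (m : S -> R) (F F' : S -> R) d : distrib m ->
  (forall s, `|F' s - F s| <= d) -> `|\sum_s m s * F' s - \sum_s m s * F s| <= d.
Proof.
move=> [h0 h1] H.
have Hs : forall s, `|m s * F' s - m s * F s| <= m s * d.
  by move=> s; rewrite -mulrBr normrM ger0_norm //; apply: ler_wpM2l.
apply: le_trans (sum_close Hs) _.
by rewrite -mulr_suml h1 mul1r.
Qed.

End Tools.

Section Limit.
Variables (R : realType) (S B : finType) (m : S -> R) (G : game R S B)
  (c : B -> R) (tau : R) (e : S -> B -> R).
Hypothesis md : distrib m.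
Hypothesis approx : forall eps : R, 0 < eps -> exists (G' : game R S B) (c' : B -> R) (t' : R)
  (e' : S -> B -> R), near_game eps G G' /\ (forall b, `|c' b - c b| < eps) /\
  `|t' - tau| < eps /\ (forall a b, `|e' a b - e a b| < eps) /\ NProp m G' c' t' e'.

Definition Ac := \sum_s m s * mixpay G.2 s c.
Definition We := \sum_s m s * mixpay G.2 s (e s).

Lemma L_c0 b : 0 <= c b.
Proof.
apply: (le_epsK (K := 1) (d := 1)) => // eps e0 _.
have [G' [c' [t' [e' [hn [hc [ht [he [[c0 c1] [[t0 t1] [[eb es] [f4 [f5 [f6 [f7 [f8 f9]]]]]]]]]]]]]]]] := approx e0.
have [h1 h2] := abs_lt2 (hc b); have := c0 b; lra.
Qed.

Lemma L_csum : \sum_b c b = 1.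
Proof.
have H : forall eps, 0 < eps -> `|1 - \sum_b c b| <= eps * NBb R B.
  move=> eps e0.
  have [G' [c' [t' [e' [hn [hc [ht [he [[c0 c1] [[t0 t1] [[eb es] [f4 [f5 [f6 [f7 [f8 f9]]]]]]]]]]]]]]]] := approx e0.
  have H1 : `|\sum_b c' b - \sum_b c b| <= \sum_(b : B) eps.
    by apply: sum_close => b; exact: ltW (hc b).
  by rewrite c1 sum_constB' in H1.
have N0 : 0 <= NBb R B by rewrite /NBb ler0n.
apply/eqP; rewrite eq_le; apply/andP; split.
  apply: (le_epsK (K := NBb R B) (d := 1)) => // eps e0 _.
  have := H eps e0; rewrite ler_norml => /andP [h1 h2]; lra.
apply: (le_epsK (K := NBb R B) (d := 1)) => // eps e0 _.
have := H eps e0; rewrite ler_norml => /andP [h1 h2]; lra.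
Qed.

Lemma L_tau : 0 <= tau.
Proof.
apply: (le_epsK (K := 1) (d := 1)) => // eps e0 _.
have [G' [c' [t' [e' [hn [hc [ht [he [[c0 c1] [[t0 t1] [[eb es] [f4 [f5 [f6 [f7 [f8 f9]]]]]]]]]]]]]]]] := approx e0.
have [h1 h2] := abs_lt2 ht; lra.
Qed.

Lemma L_ebound a b : `|e a b| <= 1.
Proof.
apply: (le_epsK (K := 1) (d := 1)) => // eps e0 _.
have [G' [c' [t' [e' [hn [hc [ht [he [[c0 c1] [[t0 t1] [[eb es] [f4 [f5 [f6 [f7 [f8 f9]]]]]]]]]]]]]]]] := approx e0.
have h : e a b = e' a b + (e a b - e' a b) by ring.
rewrite [X in `|X|]h; apply: le_trans (ler_normD _ _) _.
have := he a b; rewrite distrC => h1.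
have := eb a b; lra.
Qed.

Lemma L_esum a : \sum_b e a b = 0.
Proof.
have H : forall eps, 0 < eps -> `|0 - \sum_b e a b| <= eps * NBb R B.
  move=> eps e0.
  have [G' [c' [t' [e' [hn [hc [ht [he [[c0 c1] [[t0 t1] [[eb es] [f4 [f5 [f6 [f7 [f8 f9]]]]]]]]]]]]]]]] := approx e0.
  have H1 : `|\sum_b e' a b - \sum_b e a b| <= \sum_(b : B) eps.
    by apply: sum_close => b; exact: ltW (he a b).
  by rewrite (es a) sum_constB' in H1.
have N0 : 0 <= NBb R B by rewrite /NBb ler0n.
apply/eqP; rewrite eq_le; apply/andP; split.
  apply: (le_epsK (K := NBb R B) (d := 1)) => // eps e0 _.
  have := H eps e0; rewrite ler_norml => /andP [h1 h2]; lra.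
apply: (le_epsK (K := NBb R B) (d := 1)) => // eps e0 _.
have := H eps e0; rewrite ler_norml => /andP [h1 h2]; lra.
Qed.

Lemma L4 b : c b = 0 -> forall a, 0 <= e a b.
Proof.
move=> cb a.
have N1 : 0 < 1 / NBb R B.
  apply: divr_gt0 => //; rewrite /NBb ltr0n; apply/card_gt0P; exists b => //.
apply: (le_epsK (K := 1) (d := 1 / NBb R B)) => // eps e0 ed.
have [G' [c' [t' [e' [hn [hc [ht [he [[c0 c1] [[t0 t1] [[eb es] [f4 [f5 [f6 [f7 [f8 f9]]]]]]]]]]]]]]]] := approx e0.
have [h1 _] := abs_lt2 (hc b); rewrite cb add0r in h1.
have [h2 h3] := abs_lt2 (he a b).
case: (f4 b) => [H|H]; first by have := H a; lra.
lra.
Qed.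

Lemma L5 : exists a a' b, e a b != e a' b.
Proof.
have [G' [c' [t' [e' [hn [hc [ht [he [[c0 c1] [[t0 t1] [[eb es] [f4 [f5 [f6 [f7 [f8 f9]]]]]]]]]]]]]]]] := approx (eps := 1) ltr01.
case: f5 => a [a' [b _]].
have K0 : 0 < KK R S B by rewrite /KK ltr0n; apply/card_gt0P; exists (a, b).
have e0 : 0 < 1 / (4 * KK R S B) by apply: divr_gt0 => //; lra.
have [G'' [c'' [t'' [e'' [hn2 [hc2 [ht2 [he2 [_ [_ [_ [_ [f5' [_ [_ [_ _]]]]]]]]]]]]]]]] := approx e0.
case: f5' => a2 [a3 [b2 hb]].
exists a2, a3, b2; apply/eqP => E.
have [h1 h2] := abs_lt2 (he2 a2 b2); have [h3 h4] := abs_lt2 (he2 a3 b2).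
have : 1 / KK R S B = 4 * (1 / (4 * KK R S B)) by field; lra.
lra.
Qed.

Lemma L6 mu : inM m mu -> 0 <= dsum mu (fun s a => mixpay G.1 s (e s) - mixpay G.1 s (e a)).
Proof.
move=> HM.
apply: (le_epsK (K := 2 * Kv G.1) (d := 1)); first by have := Kv_ge0 G.1; lra.
  by [].
move=> eps e0 _.
have [G' [c' [t' [e' [hn [hc [ht [he [[c0 c1] [[t0 t1] [[eb es] [f4 [f5 [f6 [f7 [f8 f9]]]]]]]]]]]]]]]] := approx e0.
have := f6 mu HM.
have Hc : forall s x, `|mixpay G'.1 s (e' x) - mixpay G.1 s (e x)| <= eps * Kv G.1.
  move=> s x; apply: mixpay_closeK; first exact: ltW.
  - by move=> b; apply: eb.
  - by move=> b; apply: ltW; apply: he.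
  - by move=> b; have [h _] := hn s b; apply: ltW.
have := @dsum_close _ _ m mu (fun s a => mixpay G.1 s (e s) - mixpay G.1 s (e a))
  (fun s a => mixpay G'.1 s (e' s) - mixpay G'.1 s (e' a)) (2 * (eps * Kv G.1)) HM.
move=> H h0.
have : `|dsum mu (fun s a => mixpay G'.1 s (e' s) - mixpay G'.1 s (e' a)) -
     dsum mu (fun s a => mixpay G.1 s (e s) - mixpay G.1 s (e a))| <= 2 * (eps * Kv G.1).
  apply: H => s a.
  have -> : mixpay G'.1 s (e' s) - mixpay G'.1 s (e' a) - (mixpay G.1 s (e s) - mixpay G.1 s (e a))
    = (mixpay G'.1 s (e' s) - mixpay G.1 s (e s)) - (mixpay G'.1 s (e' a) - mixpay G.1 s (e a)) by ring.
  apply: le_trans (ler_normB _ _) _.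
  have := Hc s s; have := Hc s a; lra.
rewrite ler_norml => /andP [h1 h2].
lra.
Qed.

Lemma prod_le_abs (x z : R) : x * z <= `|x| * `|z|.
Proof. by rewrite -normrM; apply: ler_norm. Qed.

Lemma L7 : 0 <= We.
Proof.
apply: (le_epsK (K := Kv G.2) (d := 1)); [exact: Kv_ge0 | by [] |].
move=> eps e0 _.
have [G' [c' [t' [e' [hn [hc [ht [he [[c0 c1] [[t0 t1] [[eb es] [f4 [f5 [f6 [f7 [f8 f9]]]]]]]]]]]]]]]] := approx e0.
have : `|\sum_s m s * mixpay G'.2 s (e' s) - We| <= eps * Kv G.2.
  apply: msum_close => // s; apply: mixpay_closeK; first exact: ltW.
  - by move=> b; apply: eb.
  - by move=> b; apply: ltW; apply: he.
  - by move=> b; have [_ h] := hn s b; apply: ltW.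
rewrite ler_norml => /andP [h1 h2]; lra.
Qed.

Lemma L8 : v2 m G <= Ac + tau * We.
Proof.
have [a [a' [b0 _]]] := L5.
set K := 1 + Kv G.2 + (`|tau| + 1) * Kv G.2 + `|We|.
have K0 : 0 <= K.
  have := Kv_ge0 G.2; have := normr_ge0 tau; have := normr_ge0 We.
  rewrite /K => *; apply: addr_ge0; [|exact: normr_ge0].
  apply: addr_ge0; [lra| apply: mulr_ge0; lra].
apply: (le_epsK (K := K) (d := 1)) => // eps e0 e1.
have [G' [c' [t' [e' [hn [hc [ht [he [[c0 c1] [[t0 t1] [[eb es] [f4 [f5 [f6 [f7 [f8 f9]]]]]]]]]]]]]]]] := approx e0.
have [bm hbm] := v2_attain m G b0.
have hv : \sum_s m s * G.2 s bm <= \sum_s m s * G'.2 s bm + eps.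
  have : `|\sum_s m s * G'.2 s bm - \sum_s m s * G.2 s bm| <= eps.
    apply: msum_close => // s; have [_ h] := hn s bm; exact: ltW.
  rewrite ler_norml => /andP [h1 h2]; lra.
have hv' := v2_ge m G' bm.
have c'1 : forall b, `|c' b| <= 1.
  move=> b; rewrite ger0_norm //; rewrite -c1; exact: term_le_sum.
have hA : \sum_s m s * mixpay G'.2 s c' <= Ac + eps * Kv G.2.
  have : `|\sum_s m s * mixpay G'.2 s c' - Ac| <= eps * Kv G.2.
    apply: msum_close => // s; apply: mixpay_closeK; first exact: ltW.
    - exact: c'1.
    - by move=> b; apply: ltW; apply: hc.
    - by move=> b; have [_ h] := hn s b; apply: ltW.
  rewrite ler_norml => /andP [h1 h2]; lra.
set W' := \sum_s m s * mixpay G'.2 s (e' s) in f8 *.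
have hW : `|W' - We| <= eps * Kv G.2.
  apply: msum_close => // s; apply: mixpay_closeK; first exact: ltW.
  - by move=> b; apply: eb.
  - by move=> b; apply: ltW; apply: he.
  - by move=> b; have [_ h] := hn s b; apply: ltW.
have ht' : `|t'| <= `|tau| + 1.
  have h : t' = tau + (t' - tau) by ring.
  rewrite [X in `|X|]h; apply: le_trans (ler_normD _ _) _; have := ltW ht; lra.
have hT1 : t' * (W' - We) <= (`|tau| + 1) * (eps * Kv G.2).
  apply: le_trans (prod_le_abs _ _) _.
  apply: ler_pM; [exact: normr_ge0 | exact: normr_ge0 | exact: ht' | exact: hW].
have hT2 : (t' - tau) * We <= eps * `|We|.
  apply: le_trans (prod_le_abs _ _) _.
  apply: ler_wpM2r; [exact: normr_ge0 | exact: ltW].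
have hT : t' * W' = tau * We + t' * (W' - We) + (t' - tau) * We by ring.
have hKe : K * eps = eps + eps * Kv G.2 + (`|tau| + 1) * (eps * Kv G.2) + eps * `|We|.
  by rewrite /K; ring.
rewrite hKe. lra.
Qed.

Lemma L9 a b : 0 <= c b + tau * e a b.
Proof.
have K0 : 0 <= 3 + `|tau| by have := normr_ge0 tau; lra.
apply: (le_epsK (K := 3 + `|tau|) (d := 1)) => // eps e0 e1.
have [G' [c' [t' [e' [hn [hc [ht [he [[c0 c1] [[t0 t1] [[eb es] [f4 [f5 [f6 [f7 [f8 f9]]]]]]]]]]]]]]]] := approx e0.
have h9 := f9 a b.
have ht' : `|t'| <= `|tau| + 1.
  have h : t' = tau + (t' - tau) by ring.
  rewrite [X in `|X|]h; apply: le_trans (ler_normD _ _) _; have := ltW ht; lra.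
have hT1 : t' * (e' a b - e a b) <= (`|tau| + 1) * eps.
  apply: le_trans (prod_le_abs _ _) _.
  apply: ler_pM; [exact: normr_ge0 | exact: normr_ge0 | exact: ht' | by apply: ltW; apply: he].
have hT2 : (t' - tau) * e a b <= eps * 1.
  apply: le_trans (prod_le_abs _ _) _.
  apply: ler_pM; [exact: normr_ge0 | exact: normr_ge0 | exact: ltW | by apply: L_ebound].
have [hc1 hc2] := abs_lt2 (hc b).
have E : c' b + t' * e' a b = c b + tau * e a b + (c' b - c b) + t' * (e' a b - e a b)
   + (t' - tau) * e a b by ring.
rewrite E in h9.
have hK : (3 + `|tau|) * eps = eps + (`|tau| + 1) * eps + eps by ring.
rewrite hK; lra.
Qed.

Lemma final_y (eta : R) : 0 < eta -> (forall a b, 0 <= c b + eta * e a b) ->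
  v2 m G <= Ac + eta * We -> condB m G.
Proof.
move=> et0 hnn hv.
exists (fun a b => c b + eta * e a b); split.
  move=> a; split; first exact: hnn.
  by rewrite big_split /= -mulr_sumr L_esum L_csum mulr0 addr0.
split.
  have [a [a' [b hb]]] := L5; exists a, a' => E.
  have := congr1 (fun f => f b) E => /= H.
  move/addrI in H; move/(mulfI (lt0r_neq0 et0)) in H.
  by move: hb; rewrite H eqxx.
split.
  move=> mu HM; rewrite -subr_ge0 Upay_diff //.
  change (0 <= dsum mu (fun s a => mixpay G.1 s (fun b => c b + eta * e s b) -
     mixpay G.1 s (fun b => c b + eta * e a b))).
  have -> : dsum mu (fun s a => mixpay G.1 s (fun b => c b + eta * e s b) -
     mixpay G.1 s (fun b => c b + eta * e a b)) =
     dsum mu (fun s a => eta * (mixpay G.1 s (e s) - mixpay G.1 s (e a))).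
    by apply: dsum_ext => s a; rewrite !mixpay_lin; ring.
  rewrite dsumZ; apply: mulr_ge0; [exact: ltW | exact: L6].
rewrite /C2 Upay_mu0.
have -> : \sum_s m s * mixpay G.2 s (fun b => c b + eta * e s b) = Ac + eta * We.
  rewrite /Ac /We mulr_sumr -big_split /=; apply: eq_bigr => s _.
  rewrite mixpay_lin; ring.
exact: hv.
Qed.

Lemma limit_condB : condB m G.
Proof.
case/boolP: (0 < tau) => ht.
  apply: (@final_y tau ht); [exact: L9 | exact: L8].
have t0 : tau = 0 by apply/eqP; rewrite eq_le L_tau andbT leNgt.
pose eta := \big[Num.min/1]_(b | 0 < c b) c b.
have et0 : 0 < eta by apply: bigmin_pos.
apply: (@final_y eta et0).
  move=> a b; case/boolP: (0 < c b) => hcb.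
    have : eta <= c b by apply: bigmin_leF.
    have := L_ebound a b; rewrite ler_norml => /andP [h1 h2] h3.
    have : eta * e a b >= - eta by nra.
    lra.
  have cb : c b = 0 by apply/eqP; rewrite eq_le L_c0 andbT leNgt.
  rewrite cb add0r; apply: mulr_ge0; [exact: ltW | exact: L4].
have := L8; rewrite t0 mul0r addr0 => h.
have := L7 => h7; have : 0 <= eta * We by apply: mulr_ge0 => //; exact: ltW.
lra.
Qed.

End Limit.


Lemma cvg_epsK {R : realType} {u : nat -> R} : cvgn u ->
  forall e : R, 0 < e -> exists K, forall k, (K <= k)%N -> `|u k - limn u| < e.
Proof.
move=> /cvgrPdist_lt H e e0.
have := H e e0. case=> K _ HK. exists K => k Hk.
rewrite distrC. exact: HK.
Qed.

Lemma incr_ge {f : nat -> nat} : increasing_seq f -> forall k, (k <= f k)%N.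
Proof.
move=> Hf; elim=> [//|k IH].
have : (f k < f k.+1)%N.
  have := Hf k.+1 k. rewrite /= ltnn => H. by rewrite ltnNge; apply/negbT.
by move=> H; apply: leq_ltn_trans IH H.
Qed.

Lemma cluster_fin (R : realType) (I : finType) (x : nat -> I -> R) (M : R) :
  (forall n i, `|x n i| <= M) ->
  exists l : I -> R, forall e : R, 0 < e -> forall N, exists n, (N <= n)%N /\
     forall i, `|x n i - l i| < e.
Proof.
move=> Hb.
suff [f [Hf [l Hl]]] : exists f : nat -> nat, increasing_seq f /\ exists l : I -> R,
    forall e : R, 0 < e -> exists K, forall k, (K <= k)%N -> forall i, i \in enum I ->
      `|x (f k) i - l i| < e.
  exists l => e e0 N. have [K HK] := Hl e e0.
  exists (f (maxn K N)); split.
    exact: ssrnat.leq_trans (leq_maxr K N) (incr_ge Hf _).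
  move=> i; apply: HK; [by rewrite leq_maxl | by rewrite mem_enum].
elim: (enum I) => [|i0 s [f [Hf [l Hl]]]].
  exists id; split; first by []. exists (fun _ => 0) => e e0; exists 0%N => k _ i.
  by rewrite in_nil.
pose u k := x (f k) i0.
have bu : bounded_fun u.
  exists M; split; first by rewrite num_real.
  move=> y My z _ /=; rewrite /u; apply: le_trans (Hb _ _) (ltW My).
have [g Hg cg] := bolzano_weierstrass bu.
exists (f \o g); split.
  by move=> n m /=; rewrite Hf; exact: Hg.
exists (fun i => if i == i0 then limn (u \o g) else l i) => e e0.
have [K1 HK1] := Hl e e0.
have [K2 HK2] := cvg_epsK cg e0.
exists (maxn K1 K2) => k Hk i; rewrite in_cons => /orP [/eqP ->|Hi].
  rewrite eqxx. have := HK2 k. rewrite /comp /u. apply. exact: ssrnat.leq_trans (leq_maxr _ _) Hk.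
case: (eqVneq i i0) => [->|_].
  rewrite ?eqxx. have := HK2 k. rewrite /comp /u. apply. exact: ssrnat.leq_trans (leq_maxr _ _) Hk.
apply: HK1 => //. apply: ssrnat.leq_trans (incr_ge Hg k). exact: ssrnat.leq_trans (leq_maxl _ _) Hk.
Qed.

Lemma inv_mono (R : realType) (N n : nat) : (N <= n)%N ->
  1 / (n.+1%:R : R) <= 1 / (N.+1%:R).
Proof.
move=> h; rewrite !div1r lef_pV2 ?posrE ?ltr0Sn // ler_nat ltnS //.
Qed.

Lemma small_N (R : realType) (eps : R) : 0 < eps -> exists N : nat, 1 / (N.+1%:R : R) < eps.
Proof.
move=> e0; exists (Num.bound (1 / eps)).
have h := @archi_boundP R (1 / eps) (ltW (divr_gt0 ltr01 e0)).
set N := Num.bound (1 / eps) in h *.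
rewrite ltr_pdivrMr // in h.
rewrite ltr_pdivrMr ?ltr0Sn // -natr1. nra.
Qed.

Section Part2.
Variables (R : realType) (S B : finType) (m : S -> R) (G : game R S B).
Hypothesis md : distrib m.

Lemma exists_data (n : nat) : 
  (exists G', near_game (1 / (n.+1%:R : R)) G G' /\ condB m G') ->
  exists X : (game R S B * (B -> R) * R * (S -> B -> R)),
    near_game (1 / (n.+1%:R : R)) G X.1.1.1 /\ NProp m X.1.1.1 X.1.1.2 X.1.2 X.2.
Proof.
case=> G' [hn [y [ys [[a0 [a1 ya]] [c1 c2]]]]].
have [b0 _] : exists b : B, true.
  case/boolP: [exists b : B, true] => [/existsP [b _]|/existsPn H]; first by exists b.
  exfalso; have [_ h] := ys a0; move: h; rewrite big_pred0 ?(oner_eq0) //.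
    by move=> /esym/eqP; rewrite oner_eq0.
  by move=> b; have := H b.
exists (G', cc y a0 b0, tau y a0, ee y a0 b0); split => //=.
exact: (normalize_main ys c1 c2 b0 ya).
Qed.

Lemma part2 : ~ condB m G ->
  exists eps : R, 0 < eps /\ forall G' : game R S B, near_game eps G G' -> ~ condB m G'.
Proof.
move=> nB; apply: Classical_Prop.NNPP => H.
have Hn : forall n : nat, exists X : (game R S B * (B -> R) * R * (S -> B -> R)),
    near_game (1 / (n.+1%:R : R)) G X.1.1.1 /\ NProp m X.1.1.1 X.1.1.2 X.1.2 X.2.
  move=> n; apply: exists_data.
  apply: Classical_Prop.NNPP => H2; apply: H; exists (1 / n.+1%:R); split.
    by apply: divr_gt0 => //; rewrite ltr0Sn.
  by move=> G' hn hB; apply: H2; exists G'.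
have [f Hf] := choice Hn.
pose I := ((B + unit) + (S * B))%type.
pose x (n : nat) (i : I) : R := match i with
  | inl (inl b) => (f n).1.1.2 b
  | inl (inr _) => (f n).1.2
  | inr p => (f n).2 p.1 p.2 end.
have K0 : 0 <= KK R S B by rewrite /KK ler0n.
have hb : forall n i, `|x n i| <= KK R S B + 1.
  move=> n i; have [_ HP] := Hf n.
  have [[c0 c1] [[t0 t1] [[eb es] _]]] := HP.
  case: i => [[b|[]]|p] /=.
  - rewrite ger0_norm //; apply: le_trans (_ : 1 <= _); last lra.
    by rewrite -c1; apply: term_le_sum.
  - by rewrite gtr0_norm //; lra.
  - by apply: le_trans (eb _ _) _; lra.
have [l Hl] := cluster_fin hb.
apply: nB.
apply: (@limit_condB R S B m G (fun b => l (inl (inl b))) (l (inl (inr tt)))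
   (fun a b => l (inr (a, b))) md).
move=> eps e0.
have [N hN] := small_N e0.
have [n [hnN hx]] := Hl eps e0 N.
exists (f n).1.1.1, (f n).1.1.2, (f n).1.2, (f n).2.
have [hnear HP] := Hf n.
split.
  move=> s b; have [h1 h2] := hnear s b.
  have := inv_mono R hnN => h3.
  have h4 := le_lt_trans h3 hN.
  by split; [exact: lt_trans h1 h4 | exact: lt_trans h2 h4].
split; first by move=> b; exact: (hx (inl (inl b))).
split; first by exact: (hx (inl (inr tt))).
split; first by move=> a b; exact: (hx (inr (a, b))).
exact: HP.
Qed.

End Part2.

Theorem theorem3 (R : realType) (S B : finType) (p : S -> S -> R) (m : S -> R) :
  mc_stochastic p -> mc_irreducible p -> mc_aperiodic p -> mc_invariant p m ->
  forall G : game R S B,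
    (condB m G ->
       forall eps : R, 0 < eps ->
         exists G' : game R S B, near_game eps G G' /\ exists w, Ehat m G' w) /\
    (~ condB m G ->
       exists eps : R, 0 < eps /\
         forall G' : game R S B, near_game eps G G' -> ~ condB m G').
Proof.
move=> Hs Hirr _ Hinv G.
have md : distrib m by case: Hinv.
split.
  apply: part1 => //; exact: m_pos Hs Hirr Hinv.
exact: part2.
Qed.
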